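(* Let $n\ge1$, $\nu\ge1$ be integers and $\delta\in\{0,1,2\}$. The orthogonal graph $\mathcal{O}^{(2\nu+\delta)}_{2^n}$ is vertex transitive and arc transitive.
   Context: Let $V^{2\nu+\delta}$ be the set of tuples $\vec a=(a_1,\ldots,a_{2\nu+\delta})\in(\mathbb{Z}_{2^n})^{2\nu+\delta}$ such that some $a_i$ is a unit of $\mathbb{Z}_{2^n}$. Write $\vec a\sim\vec b$ if $\vec a=\lambda\vec b$ for some $\lambda\in\mathbb{Z}_{2^n}^\times$, let $[\vec a]$ denote the equivalence class and $V^{2\nu+\delta}_\sim$ the set of classes. Let $G_{2\nu+\delta,\Delta}=\begin{pmatrix}0&I_\nu&\\ &0&\\ &&\Delta\end{pmatrix}$ over $\mathbb{Z}_{2^n}$ (first two block sizes $\nu$, unspecified blocks zero), where $\Delta$ is empty if $\delta=0$, $\Delta=(1)$ if $\delta=1$, and $\Delta=\begin{pmatrix}z&1\\0&z\end{pmatrix}$ if $\delta=2$, with $z$ a fixed unit of $\mathbb{Z}_{2^n}$. The orthogonal graph $\mathcal{O}^{(2\nu+\delta)}_{2^n}$ has vertex set $\{[\vec a]\in V^{2\nu+\delta}_\sim:\vec a\,G_{2\nu+\delta,\Delta}\,\vec a^t=0\}$, with $[\vec a]$ adjacent to $[\vec b]$ iff $\vec a(G_{2\nu+\delta,\Delta}+G_{2\nu+\delta,\Delta}^t)\vec b^t\in\mathbb{Z}_{2^n}^\times$. A graph is arc transitive if its automorphism group acts transitively on ordered pairs of adjacent vertices. *)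

(* Defs.v *)
From HB Require Import structures.
From mathcomp Require Import all_boot all_order all_algebra.
Set Implicit Arguments. Unset Strict Implicit. Unset Printing Implicit Defensive.
Import GRing.Theory.
Local Open Scope ring_scope.

Notation Zmod2n n := 'Z_(2 ^ n)%N.

(* The Gram matrix G_{2nu+delta,Delta} (indices 0-based):
   - entry (i, i+nu) = 1 for i < nu                       (the block I_nu)
   - diagonal entries at positions >= 2nu are z if delta = 2, 1 if delta = 1
   - entry (2nu, 2nu+1) = 1 (only exists when delta = 2)
   everything else 0. *)
Definition Gmat (n nu delta : nat) (z : Zmod2n n) : 'M[Zmod2n n]_(2 * nu + delta) :=
  \matrix_(i, j)
    if (i < nu)%N && (nat_of_ord j == i + nu)%N then 1
    else if (nat_of_ord i == j) && (2 * nu <= i)%N then (if delta == 2%N then z else 1)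
    else if (nat_of_ord i == 2 * nu)%N && (nat_of_ord j == (2 * nu).+1)%N then 1
    else 0.

Section Graph.
Variables (n nu delta : nat) (z : Zmod2n n).
Local Notation R := (Zmod2n n).
Local Notation m := (2 * nu + delta)%N.
Local Notation G := (Gmat nu delta z).

Definition unimodular (a : 'rV[R]_m) : bool := [exists i, a 0 i \is a GRing.unit].

Definition isotropic (a : 'rV[R]_m) : bool := (a *m G *m a^T) 0 0 == 0.

Definition vclass (a : 'rV[R]_m) : {set 'rV[R]_m} :=
  [set l *: a | l : R & l \is a GRing.unit].

Definition orth_vertices : {set {set 'rV[R]_m}} :=
  [set vclass a | a : 'rV[R]_m & unimodular a && isotropic a].

(* adjacency: a (G + G^t) b^t is a unit (for representatives; independent of
   the choice of representatives) *)
Definition orth_adj : rel {set 'rV[R]_m} :=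
  fun C D => [exists a in C, exists b in D,
                (a *m (G + G^T) *m b^T) 0 0 \is a GRing.unit].
End Graph.

Definition graph_aut (T : finType) (V : {set T}) (e : rel T) (f : T -> T) : Prop :=
  [/\ {in V &, injective f}, f @: V = V & {in V &, forall x y, e (f x) (f y) = e x y}].

Definition vertex_transitive (T : finType) (V : {set T}) (e : rel T) : Prop :=
  forall x y, x \in V -> y \in V -> exists f, graph_aut V e f /\ f x = y.

Definition arc_transitive (T : finType) (V : {set T}) (e : rel T) : Prop :=
  forall x y u w, x \in V -> y \in V -> u \in V -> w \in V ->
    e x y -> e u w -> exists f, graph_aut V e f /\ f x = u /\ f y = w.

Arguments Gmat : clear implicits.
Arguments unimodular : clear implicits.
Arguments isotropic : clear implicits.
Arguments vclass : clear implicits.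
Arguments orth_vertices : clear implicits.
Arguments orth_adj : clear implicits.

(* Main.v *)
Require Import Defs.
From HB Require Import structures.
From mathcomp Require Import all_boot all_order all_algebra.
From mathcomp Require Import ring zify.
Set Implicit Arguments. Unset Strict Implicit. Unset Printing Implicit Defensive.
Import GRing.Theory.
Local Open Scope ring_scope.
Section Abstract.
Variables (R : comUnitRingType) (m : nat) (G : 'M[R]_m).

Definition bf (x y : 'rV[R]_m) := (x *m G *m y^T) 0 0.
Definition Qf (x : 'rV[R]_m) := (x *m G *m x^T) 0 0.
Definition Bf (x y : 'rV[R]_m) := (x *m (G + G^T) *m y^T) 0 0.

Lemma bDl x y w : bf (x + y) w = bf x w + bf y w.
Proof. by rewrite /bf !mulmxDl mxE. Qed.
Lemma bDr x y w : bf w (x + y) = bf w x + bf w y.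
Proof. by rewrite /bf linearD /= mulmxDr mxE. Qed.
Lemma bZl c x w : bf (c *: x) w = c * bf x w.
Proof. by rewrite /bf -!scalemxAl mxE. Qed.
Lemma bZr c x w : bf w (c *: x) = c * bf w x.
Proof. by rewrite /bf linearZ /= -scalemxAr mxE. Qed.
Lemma bNl x w : bf (- x) w = - bf x w.
Proof. by rewrite -scaleN1r bZl mulN1r. Qed.
Lemma bNr x w : bf w (- x) = - bf w x.
Proof. by rewrite -scaleN1r bZr mulN1r. Qed.
Lemma QfE x : Qf x = bf x x. Proof. by []. Qed.
Lemma BfE x y : Bf x y = bf x y + bf y x.
Proof.
rewrite /Bf /bf mulmxDr mulmxDl mxE; congr (_ + _).
transitivity ((y *m G *m x^T)^T 0 0); last by rewrite mxE.
by rewrite !trmx_mul trmxK mulmxA.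
Qed.

Definition bfE := (bDl, bDr, bZl, bZr, bNl, bNr).

Definition T (p q : 'rV[R]_m) : 'M[R]_m := (G + G^T) *m p^T *m q.
Lemma xT x p q : x *m T p q = Bf x p *: q.
Proof. by rewrite /T !mulmxA (mx11_scalar (x *m _ *m _)) mul_scalar_mx. Qed.

Definition isom (g : 'M[R]_m) := forall x, Qf (x *m g) = Qf x.

Lemma isom_Bf g : isom g -> forall x y, Bf (x *m g) (y *m g) = Bf x y.
Proof.
move=> Hg x y.
have H1 := Hg (x + y). rewrite mulmxDl !QfE !bfE in H1.
have := Hg x; have := Hg y; rewrite !QfE !BfE => Hy Hx.
move: H1; rewrite Hx Hy. move/eqP. rewrite -subr_eq0. move/eqP=> H.
apply/eqP; rewrite -subr_eq0; apply/eqP; rewrite -H; ring.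
Qed.

Definition Eich (e u : 'rV[R]_m) : 'M[R]_m :=
  1%:M + T e u - T u e - Qf u *: T e e.

Lemma xEich x e u : x *m Eich e u = x + Bf x e *: u - Bf x u *: e - (Qf u * Bf x e) *: e.
Proof. by rewrite /Eich !mulmxDr !mulmxN mulmx1 -scalemxAr !xT scalerA. Qed.

Lemma Eich_isom e u : Qf e = 0 -> Bf e u = 0 -> isom (Eich e u).
Proof.
move=> He Heu x; rewrite xEich !QfE !BfE !bfE.
rewrite QfE in He; rewrite BfE in Heu.
have -> : bf u e = - bf e u by apply/eqP; rewrite -subr_eq0 opprK addrC Heu.
rewrite He; ring.
Qed.

Lemma Eich_inv e u : Qf e = 0 -> Bf e u = 0 -> Eich e u *m Eich e (- u) = 1%:M.
Proof.
move=> He Heu; apply/row_matrixP => i; rewrite row_mul row1 rowE.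
rewrite !xEich.
rewrite QfE in He; rewrite BfE in Heu.
have Hue : bf u e = - bf e u by apply/eqP; rewrite -subr_eq0 opprK addrC Heu.
move: ('e_i) => x.
have H1 : Bf (x + Bf x e *: u - Bf x u *: e - (Qf u * Bf x e) *: e) e = Bf x e.
  by rewrite !QfE !BfE !bfE ?Hue ?He; ring.
have H2 : Bf (x + Bf x e *: u - Bf x u *: e - (Qf u * Bf x e) *: e) (- u) =
   - Bf x u - 2%:R * Qf u * Bf x e.
  by rewrite !QfE !BfE !bfE ?Hue ?He; ring.
have H3 : Qf (- u) = Qf u by rewrite !QfE !bfE; ring.
rewrite H1 H2 H3; apply/rowP => j; rewrite !mxE; ring.
Qed.

Lemma Eich_unit e u : Qf e = 0 -> Bf e u = 0 -> Eich e u \in unitmx.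
Proof. by move=> He Heu; case: (mulmx1_unit (Eich_inv He Heu)). Qed.


Lemma BfC x y : Bf x y = Bf y x.
Proof. by rewrite !BfE addrC. Qed.

Lemma isom_mul g h : isom g -> isom h -> isom (g *m h).
Proof. by move=> Hg Hh x; rewrite mulmxA Hh Hg. Qed.

Lemma isom_inv g : isom g -> g \in unitmx -> isom (invmx g).
Proof. by move=> Hg Hu x; rewrite -{2}(mulmxKV Hu x) Hg. Qed.

Lemma isom1 : isom 1%:M.
Proof. by move=> x; rewrite mulmx1. Qed.

Definition Refl (v : 'rV[R]_m) : 'M[R]_m := 1%:M - (Qf v)^-1 *: T v v.

Lemma xRefl x v : x *m Refl v = x - ((Qf v)^-1 * Bf x v) *: v.
Proof. by rewrite /Refl mulmxDr mulmxN mulmx1 -scalemxAr xT scalerA. Qed.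

Lemma Refl_isom v : Qf v \is a GRing.unit -> isom (Refl v).
Proof.
move=> Hv x; rewrite xRefl.
have Hq := mulVr Hv. rewrite !QfE in Hq.
rewrite !QfE !BfE !bfE.
transitivity (bf x x + ((bf v v)^-1 * (bf x v + bf v x)) * (bf x v + bf v x) * ((bf v v)^-1 * bf v v - 1)); first ring.
by rewrite Hq subrr mulr0 addr0.
Qed.

Lemma Refl_inv v : Qf v \is a GRing.unit -> Refl v *m Refl v = 1%:M.
Proof.
move=> Hv; apply/row_matrixP => i; rewrite row_mul row1 rowE.
rewrite !xRefl; move: ('e_i) => x.
have Hq := mulVr Hv. rewrite !QfE in Hq.
have H1 : Bf (x - ((Qf v)^-1 * Bf x v) *: v) v = - Bf x v.
  rewrite !QfE !BfE !bfE.
  transitivity (- (bf x v + bf v x) - 2%:R * (bf x v + bf v x) * ((bf v v)^-1 * bf v v - 1)); first ring.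
  by rewrite Hq subrr mulr0 subr0.
by rewrite H1 mulrN scaleNr opprK subrK.
Qed.

Lemma Refl_unit v : Qf v \is a GRing.unit -> Refl v \in unitmx.
Proof. by move=> Hv; case: (mulmx1_unit (Refl_inv Hv)). Qed.

Lemma BfZl c x y : Bf (c *: x) y = c * Bf x y.
Proof. by rewrite !BfE !bfE mulrDr. Qed.

Lemma lemA e f a : Qf e = 0 -> Qf f = 0 -> Bf e f = 1 -> Qf a = 0 ->
  Bf a f \is a GRing.unit ->
  exists g, [/\ isom g, g \in unitmx, a *m g = Bf a f *: e & f *m g = f].
Proof.
move=> He Hf Hef Ha Hu.
set al := Bf a f.
set w := a - al *: e - Bf a e *: f.
set u := - al^-1 *: w.
have Hfw : Bf f w = 0.
  rewrite /w /al; move: He Hf Hef; rewrite !QfE !BfE !bfE => He Hf Hef.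
  rewrite ?He ?Hf.
  transitivity ((bf a f + bf f a) * (1 - (bf e f + bf f e))); first ring.
  by rewrite Hef subrr mulr0.
have Hfu : Bf f u = 0 by rewrite BfC /u BfZl BfC Hfw mulr0.
exists (Eich f u); split.
- exact: Eich_isom.
- exact: Eich_unit.
- set d := Bf a e - Bf a u - Qf u * al.
  have Hag : a *m Eich f u = al *: e + d *: f.
    rewrite xEich -/al /u scalerA mulrN mulrV // scaleN1r /w /d.
    by apply/rowP => j; rewrite !mxE; ring.
  have Hq : Qf (al *: e + d *: f) = al * d.
    rewrite !QfE !bfE; rewrite QfE in He; rewrite QfE in Hf; rewrite BfE in Hef.
    rewrite He Hf.
    transitivity (al * d * (bf e f + bf f e)); first ring.
    by rewrite Hef mulr1.
  have Hd : al * d = 0 by rewrite -Hq -Hag Eich_isom.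
  have Hd0 : d = 0 by rewrite -(mulKr Hu d) Hd mulr0.
  by rewrite Hag Hd0 scale0r addr0.
- rewrite xEich.
  have Hff : Bf f f = 0 by rewrite BfE -QfE Hf addr0.
  by rewrite Hff Hfu !scale0r mulr0 scale0r !subr0 addr0.
Qed.


Lemma bf_e (i j : 'I_m) : bf 'e_i 'e_j = G i j.
Proof. by rewrite /bf -rowE trmx_delta -colE !mxE. Qed.

Lemma Bf_row x k : Bf x 'e_k = \sum_i x 0 i * (G + G^T) i k.
Proof. by rewrite /Bf trmx_delta -colE !mxE. Qed.


Lemma BfDl x y w : Bf (x + y) w = Bf x w + Bf y w.
Proof. by rewrite !BfE !bfE; ring. Qed.
Lemma BfDr x y w : Bf w (x + y) = Bf w x + Bf w y.
Proof. by rewrite !BfE !bfE; ring. Qed.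
Lemma BfNr x w : Bf w (- x) = - Bf w x.
Proof. by rewrite !BfE !bfE; ring. Qed.
Lemma BfZr c x y : Bf x (c *: y) = c * Bf x y.
Proof. by rewrite !BfE !bfE; ring. Qed.
Lemma QfD x y : Qf (x + y) = Qf x + Qf y + Bf x y.
Proof. by rewrite !QfE !BfE !bfE; ring. Qed.
Lemma QfB x y : Qf (x - y) = Qf x + Qf y - Bf x y.
Proof. by rewrite !QfE !BfE !bfE; ring. Qed.
Lemma Bfxx x : Bf x x = 2%:R * Qf x.
Proof. by rewrite !QfE !BfE; ring. Qed.

End Abstract.
Definition pn (nu k : nat) : nat := if (k < nu)%N then (k + nu)%N else (k - nu)%N.

Lemma M_entry n nu delta (z : 'Z_(2^n)) (i k : 'I_(2 * nu + delta)) :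
  (0 < nu)%N -> (k < 2 * nu)%N ->
  (Gmat n nu delta z + (Gmat n nu delta z)^T) i k = ((i : nat) == pn nu k)%:R.
Proof.
move=> hnu hk; rewrite !mxE /pn.
do ![case: ifP]; move=> *; rewrite ?addr0 ?add0r //. all: try (exfalso; lia). all: case: eqP => // *; exfalso; lia.
Qed.

Section Zmod.
Variables (n : nat).
Hypothesis hn : (0 < n)%N.
Local Notation RR := ('Z_(2 ^ n)).

Lemma two_n_gt1 : (1 < 2 ^ n)%N.
Proof. by rewrite -{1}(expn0 2) ltn_exp2l. Qed.

Lemma Zval (x : RR) : x = (x : nat)%:R.
Proof. by rewrite natr_Zp. Qed.

Lemma Zunit (k : nat) : ((k%:R : RR) \is a GRing.unit) = odd k.
Proof. by rewrite unitZpE ?two_n_gt1 // coprime_pexpl // coprime2n. Qed.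

Lemma Zunit_val (x : RR) : (x \is a GRing.unit) = odd (x : nat).
Proof. by rewrite {1}(Zval x) Zunit. Qed.

Lemma ZunitD (x y : RR) : (x + y \is a GRing.unit) = (x \is a GRing.unit) (+) (y \is a GRing.unit).
Proof.
rewrite (_ : x + y = ((x : nat) + (y : nat))%:R); last by rewrite natrD -!Zval.
by rewrite Zunit oddD !Zunit_val.
Qed.

Lemma Z2unit : ((2%:R : RR) \is a GRing.unit) = false.
Proof. by rewrite Zunit. Qed.

Lemma Zhalf (x : RR) : x \isn't a GRing.unit -> x = 2%:R * ((x : nat)./2)%:R.
Proof.
rewrite Zunit_val => hx; rewrite {1}(Zval x) -natrM; congr (_%:R).
by rewrite -{1}(odd_double_half x) (negbTE hx) add0n -muln2 mulnC.
Qed.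

Lemma Z2M (y : RR) : (2%:R * y) \isn't a GRing.unit.
Proof. by rewrite unitrM Z2unit. Qed.

End Zmod.

Section Conc.
Variables (n nu delta : nat) (z : 'Z_(2 ^ n)).
Hypotheses (hn : (0 < n)%N) (hnu : (0 < nu)%N).
Local Notation m := (2 * nu + delta)%N.
Local Notation GG := (Gmat n nu delta z).

Lemma Bf_e (x : 'rV_m) (k j : 'I_m) : (k < 2 * nu)%N -> (j : nat) = pn nu k ->
  Bf GG x 'e_k = x 0 j.
Proof.
move=> hk hj; rewrite Bf_row (bigD1 j) //= big1 ?addr0.
  by rewrite M_entry // hj eqxx mulr1.
move=> i hij; rewrite M_entry // -hj.
by rewrite (_ : ((i : nat) == j) = false) ?mulr0 //; exact/negbTE.
Qed.

Lemma Qf_e (k : 'I_m) : (k < 2 * nu)%N -> Qf GG 'e_k = 0.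
Proof.
move=> hk; rewrite QfE bf_e mxE.
do ![case: ifP]; move=> * //; exfalso; lia.
Qed.

Lemma Bf_ee (k j : 'I_m) : (k < 2 * nu)%N -> (j : nat) = pn nu k -> Bf GG 'e_j 'e_k = 1.
Proof. by move=> hk hj; rewrite (Bf_e _ hk hj) mxE !eqxx. Qed.

Definition tl (a : 'rV['Z_(2^n)]_m) : 'rV_m := \row_k (if (k < 2 * nu)%N then 0 else a 0 k).

Lemma tail_nonunit (a : 'rV_m) : (forall k : 'I_m, (k < 2 * nu)%N -> a 0 k \isn't a GRing.unit) ->
  Qf GG a = 0 -> Qf GG (tl a) \isn't a GRing.unit.
Proof.
move=> Hk Ha0.
pose h : 'rV['Z_(2^n)]_m := \row_k (if (k < 2 * nu)%N then (((a 0 k) : nat)./2)%:R else 0).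
have Ha : a = 2%:R *: h + tl a.
  apply/rowP => k; rewrite !mxE; case: ifP => hk.
    by rewrite addr0 -Zhalf // Hk.
  by rewrite mulr0 add0r.
have key : forall (t h : 'rV_m), a = 2%:R *: h + t ->
    Qf GG t = Qf GG a - 2%:R * (2%:R * bf GG h h + bf GG h t + bf GG t h).
  by move=> t h' ->; rewrite !QfE !bfE; ring.
by rewrite (key _ _ Ha) Ha0 sub0r unitrN Z2M.
Qed.

End Conc.

Lemma e_entry m (p k : 'I_m) (R : comUnitRingType) : ('e_p : 'rV[R]_m) 0 k = ((k : nat) == p)%:R.
Proof. by rewrite mxE eqxx /=. Qed.

Lemma tail_unit n nu delta (z : 'Z_(2 ^ n)) (a : 'rV_(2 * nu + delta)) :
  (0 < n)%N -> (0 < nu)%N -> (delta <= 2)%N -> z \is a GRing.unit ->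
  (exists k : 'I_(2 * nu + delta), (2 * nu <= k)%N && (a 0 k \is a GRing.unit)) ->
  Qf (Gmat n nu delta z) (@tl n nu delta a) \is a GRing.unit.
Proof.
move=> hn hnu; case: delta a => [|[|[|d]]] a // _ hz [k /andP[hk hak]].
- by have := ltn_ord k; lia.
- have hp : (2 * nu < 2 * nu + 1)%N by rewrite addn1.
  pose p := Ordinal hp.
  have kp : k = p by apply: val_inj => /=; have := ltn_ord k; lia.
  have Ht : tl a = a 0 p *: 'e_p.
    apply/rowP => j; rewrite !mxE /=.
    case: ifP => hj; case: eqP => hjp.
    + by exfalso; rewrite hjp /= in hj; lia.
    + by rewrite mulr0.
    + by rewrite hjp mulr1.
    + by exfalso; apply: hjp; apply: val_inj => /=; have := ltn_ord j; lia.
  rewrite Ht QfE !bfE bf_e mxE /=.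
  rewrite (_ : (2 * nu < nu)%N = false); last by lia.
  rewrite eqxx leqnn /= mulr1 unitrM -kp hak.
  done.
- have hp : (2 * nu < 2 * nu + 2)%N by rewrite addn2 ltnS leqnSn.
  have hq : ((2 * nu).+1 < 2 * nu + 2)%N by rewrite addn2.
  pose p := Ordinal hp. pose q := Ordinal hq.
  have Ht : tl a = a 0 p *: 'e_p + a 0 q *: 'e_q.
    apply/rowP => j; rewrite !mxE /=.
    case: ifP => hj; case: eqP => hjp; case: eqP => hjq.
    + by exfalso; rewrite hjp /= in hj; lia.
    + by exfalso; rewrite hjp /= in hj; lia.
    + by exfalso; rewrite hjq /= in hj; lia.
    + by rewrite !mulr0 addr0.
    + by exfalso; move: hjq; rewrite hjp => /(congr1 val) /=; lia.
    + by rewrite hjp mulr1 mulr0 addr0.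
    + by rewrite hjq mulr0 mulr1 add0r.
    + exfalso; case: (ltnP j (2 * nu).+1) => h2; [apply: hjp | apply: hjq];
        apply: val_inj => /=; have := ltn_ord j; lia.
  rewrite Ht QfE !bfE !bf_e !mxE /=.
  rewrite (_ : (2 * nu < nu)%N = false); last by lia.
  rewrite (_ : ((2 * nu).+1 < nu)%N = false); last by lia.
  rewrite (_ : ((2 * nu)%N == (2 * nu).+1)%N = false); last by lia.
  rewrite (_ : ((2 * nu).+1 == (2 * nu))%N = false); last by lia.
  rewrite !eqxx /= !mulr0 !mulr1 ?add0r ?addr0.
  rewrite (_ : (2 * nu <= (2 * nu).+1)%N) // leqnn !(ZunitD hn) !unitrM hz /=.
  have [kk|kk] : k = p \/ k = q.
    by case: (ltnP k (2 * nu).+1) => h; [left|right]; apply: val_inj => /=; have := ltn_ord k; lia.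
  all: move: hak; rewrite kk; case: (a 0 p \is a GRing.unit); case: (a 0 q \is a GRing.unit) => //.
Qed.

Section Conc2.
Variables (n nu delta : nat) (z : 'Z_(2 ^ n)).
Hypotheses (hn : (0 < n)%N) (hnu : (0 < nu)%N) (hd : (delta <= 2)%N) (hz : z \is a GRing.unit).
Local Notation m := (2 * nu + delta)%N.
Local Notation GG := (Gmat n nu delta z).
Local Notation Q := (@Qf _ m GG).
Local Notation B := (@Bf _ m GG).

Lemma head (a : 'rV_m) : unimodular n nu delta a -> Q a = 0 ->
  exists2 k : 'I_m, (k < 2 * nu)%N & a 0 k \is a GRing.unit.
Proof.
move=> Hu Ha.
case: (boolP [exists k : 'I_m, (k < 2 * nu)%N && (a 0 k \is a GRing.unit)]).
  by case/existsP => k /andP[hk hak]; exists k.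
move/existsPn => H.
have H1 : forall k : 'I_m, (k < 2 * nu)%N -> a 0 k \isn't a GRing.unit.
  by move=> k hk; have := H k; rewrite hk.
have := tail_nonunit hn H1 Ha.
rewrite tail_unit //.
case/existsP: Hu => k hk; exists k; rewrite hk andbT.
by case: (ltnP k (2 * nu)) => // hk'; have := H1 k hk'; rewrite hk.
Qed.

Lemma pn_lt (k : 'I_m) : (k < 2 * nu)%N -> (pn nu k < m)%N.
Proof. by rewrite /pn; case: ifP => ?; lia. Qed.

Lemma pn_lt2 (k : nat) : (k < 2 * nu)%N -> (pn nu k < 2 * nu)%N.
Proof. by rewrite /pn; case: ifP => ?; lia. Qed.

Lemma pnK (k : nat) : (k < 2 * nu)%N -> pn nu (pn nu k) = k.
Proof.
move=> hk; rewrite /pn; case: (ltnP k nu) => h1 /=.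
  by rewrite (_ : (k + nu < nu)%N = false); lia.
by rewrite (_ : (k - nu < nu)%N = true); lia.
Qed.

Lemma i0_lt : (0 < m)%N. Proof. lia. Qed.
Lemma inu_lt : (nu < m)%N. Proof. lia. Qed.
Definition i0 : 'I_m := Ordinal i0_lt.
Definition inu : 'I_m := Ordinal inu_lt.


Let Qe {k : 'I_m} (hk : (k < 2 * nu)%N) : Q 'e_k = 0 := Qf_e z hn hnu hk.
Let Be x {k j : 'I_m} (hk : (k < 2 * nu)%N) (hj : (j : nat) = pn nu k) : B x 'e_k = x 0 j :=
  Bf_e z hnu x hk hj.
Let Bee {k j : 'I_m} (hk : (k < 2 * nu)%N) (hj : (j : nat) = pn nu k) : B 'e_j 'e_k = 1 :=
  Bf_ee z hnu hk hj.

Lemma i0_lt2 : ((i0 : nat) < 2 * nu)%N. Proof. rewrite /=; lia. Qed.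
Lemma inu_lt2 : ((inu : nat) < 2 * nu)%N. Proof. rewrite /=; lia. Qed.
Lemma i0_pn : (i0 : nat) = pn nu inu. Proof. by rewrite /pn /= ltnn subnn. Qed.
Lemma inu_pn : (inu : nat) = pn nu i0. Proof. by rewrite /pn /= hnu. Qed.

Lemma to_e0 (a : 'rV_m) : unimodular n nu delta a -> Q a = 0 ->
  exists g, [/\ isom GG g, g \in unitmx & exists2 al, al \is a GRing.unit & a *m g = al *: 'e_i0].
Proof.
move=> Hu Ha.
have [k hk hak] := head Hu Ha.
pose j : 'I_m := Ordinal (pn_lt hk).
have hj2 : ((j : nat) < 2 * nu)%N := pn_lt2 hk.
have hjk : (k : nat) = pn nu j by rewrite /= pnK.
have hkj : (j : nat) = pn nu k by [].
have Uaj : B a 'e_j \is a GRing.unit by rewrite (Be _ hj2 hjk).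
have [g1 [Hg1 Ug1 Hag1 _]] := lemA (Qe hk) (Qe hj2) (Bee hj2 hjk) Ha Uaj.
have : exists g2, [/\ isom GG g2, g2 \in unitmx & 'e_k *m g2 = 'e_i0 :> 'rV_m].
  case: (eqVneq (k : nat) 0%N) => hk0.
    exists 1%:M; split; [exact: isom1 | exact: unitmx1 |].
    by rewrite mulmx1; congr (delta_mx 0 _); apply: val_inj.
  case: (eqVneq (k : nat) nu) => hknu.
    have -> : k = inu by apply: val_inj.
    pose v : 'rV['Z_(2 ^ n)]_m := 'e_i0 - 'e_inu.
    have Qv : Q v = -1.
      by rewrite /v QfB (Qe i0_lt2) (Qe inu_lt2) (Bee inu_lt2 i0_pn) !add0r.
    have Uv : Q v \is a GRing.unit by rewrite Qv unitrN unitr1.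
    exists (Refl GG v); split; [exact: Refl_isom | exact: Refl_unit |].
    rewrite xRefl Qv invrN1 /v BfDr BfNr (Bee i0_lt2 inu_pn) Bfxx (Qe inu_lt2) mulr0 subr0.
    by rewrite mulr1 scaleN1r opprK addrC subrK.
  pose f : 'rV['Z_(2 ^ n)]_m := 'e_inu + 'e_j.
  have Qf0 : Q f = 0.
    rewrite /f QfD (Qe inu_lt2) (Qe hj2) !add0r (Be _ hj2 hjk) e_entry.
    by rewrite (negbTE hknu).
  have Bef : B 'e_i0 f = 1.
    rewrite /f BfDr (Bee inu_lt2 i0_pn) (Be _ hj2 hjk) e_entry.
    by rewrite (_ : ((k : nat) == i0) = false) ?addr0 //; exact: negbTE hk0.
  have Bkf : B 'e_k f = 1.
    rewrite /f BfDr (Be _ inu_lt2 i0_pn) (Be _ hj2 hjk) !e_entry eqxx.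
    by rewrite (_ : ((i0 : nat) == k) = false) ?add0r // eq_sym; exact: negbTE hk0.
  have Ukf : B 'e_k f \is a GRing.unit by rewrite Bkf unitr1.
  have [g2 [Hg2 Ug2 Hkg2 _]] := lemA (Qe i0_lt2) Qf0 Bef (Qe hk) Ukf.
  by exists g2; split => //; rewrite Hkg2 Bkf scale1r.
case=> g2 [Hg2 Ug2 Hkg2].
exists (g1 *m g2); split; [exact: isom_mul | by rewrite unitmx_mul Ug1 Ug2 |].
exists (a 0 k); first by [].
by rewrite mulmxA Hag1 (Be _ hj2 hjk) -scalemxAl Hkg2.
Qed.

Lemma to_arc (a b : 'rV_m) : unimodular n nu delta a -> Q a = 0 -> Q b = 0 ->
  B a b \is a GRing.unit ->
  exists g, [/\ isom GG g, g \in unitmx,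
    exists2 al, al \is a GRing.unit & a *m g = al *: 'e_i0 &
    exists2 be, be \is a GRing.unit & b *m g = be *: 'e_inu].
Proof.
move=> Hu Ha Hb Hab.
have [g [Hg Ug [al Hal Hag]]] := to_e0 Hu Ha.
have Hb' : Q (b *m g) = 0 by rewrite Hg.
have Hab' : al * B 'e_i0 (b *m g) = B a b by rewrite -BfZl -Hag isom_Bf.
have Ub' : B (b *m g) 'e_i0 \is a GRing.unit.
  by move: Hab; rewrite -Hab' unitrM BfC => /andP[].
have [g3 [Hg3 Ug3 Hbg3 He0g3]] := lemA (Qe inu_lt2) (Qe i0_lt2) (Bee i0_lt2 inu_pn) Hb' Ub'.
exists (g *m g3); split; [exact: isom_mul | by rewrite unitmx_mul Ug Ug3 | |].
  by exists al => //; rewrite mulmxA Hag -scalemxAl He0g3.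
by exists (B (b *m g) 'e_i0) => //; rewrite mulmxA Hbg3.
Qed.

Local Notation V := (orth_vertices n nu delta z).
Local Notation adj := (orth_adj n nu delta z).
Local Notation vc := (vclass n nu delta).

Definition fmap (g : 'M['Z_(2 ^ n)]_m) (C : {set 'rV['Z_(2 ^ n)]_m}) : {set 'rV['Z_(2 ^ n)]_m} :=
  [set c *m g | c in C].

Lemma vclass_map g a : fmap g (vc a) = vc (a *m g).
Proof. by rewrite /fmap /vclass -imset_comp; apply: eq_imset => l /=; rewrite scalemxAl. Qed.

Lemma vclass_scale l a : l \is a GRing.unit -> vc (l *: a) = vc a.
Proof.
move=> Hl; apply/setP => y; apply/imsetP/imsetP => [[k Hk ->]|[k Hk ->]].
  exists (k * l); last by rewrite scalerA.
  by move: Hk; rewrite !inE => Hk; rewrite unitrM Hk Hl.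
exists (k / l); last by rewrite scalerA divrK.
by move: Hk; rewrite !inE => Hk; rewrite unitrM Hk unitrV Hl.
Qed.

Lemma vclass_self a : a \in vc a.
Proof. by apply/imsetP; exists 1; rewrite ?inE ?unitr1 ?scale1r. Qed.

Lemma Vmem a : unimodular n nu delta a -> Q a = 0 -> vc a \in V.
Proof. by move=> Hu Ha; apply/imsetP; exists a => //; rewrite inE Hu /isotropic -/(Qf _ _) Ha eqxx. Qed.

Lemma inV C a : C \in V -> a \in C -> [/\ unimodular n nu delta a, Q a = 0 & C = vc a].
Proof.
case/imsetP => a0; rewrite inE => /andP[Hu Hiso] -> /imsetP [l]; rewrite inE => Hl ->.
split.
- case/existsP: Hu => k Hk; apply/existsP; exists k; by rewrite mxE unitrM Hl Hk.
- by rewrite QfE !bfE (_ : bf GG a0 a0 = 0) ?mulr0 //; exact/eqP.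
- by rewrite vclass_scale.
Qed.

Lemma unimod_mul g a : g \in unitmx -> unimodular n nu delta a -> unimodular n nu delta (a *m g).
Proof.
move=> Ug /existsP[k Hk].
rewrite /unimodular; case: existsP => // H0.
have H : forall j, (a *m g) 0 j \isn't a GRing.unit.
  by move=> j; apply/negP => hu; apply: H0; exists j.
pose h : 'rV['Z_(2 ^ n)]_m := \row_j ((((a *m g) 0 j) : nat)./2)%:R.
have Hh : a *m g = 2%:R *: h.
  by apply/rowP => j; rewrite [RHS]mxE [h 0 j]mxE; apply: Zhalf => //; exact: H.
have Ha : a = 2%:R *: (h *m invmx g) by rewrite scalemxAl -Hh mulmxK.
by exfalso; move: Hk; rewrite Ha mxE (negbTE (Z2M hn _)).
Qed.

Lemma fmap_aut g : isom GG g -> g \in unitmx -> graph_aut V adj (fmap g).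
Proof.
move=> Hg Ug; split.
- by move=> C D _ _; apply: (imset_inj (can_inj (mulmxK Ug))).
- apply/setP => C; apply/imsetP/idP.
    case=> D HD ->.
    case/imsetP: (HD) => a0 _ HD0.
    have a0D : a0 \in D by rewrite HD0 vclass_self.
    have [Hu Hq ->] := inV HD a0D.
    by rewrite vclass_map; apply: Vmem; [exact: unimod_mul | rewrite Hg].
  move=> HC; case/imsetP: (HC) => a0 _ HC0.
  have a0C : a0 \in C by rewrite HC0 vclass_self.
  have [Hu Hq ->] := inV HC a0C.
  exists (vc (a0 *m invmx g)); last by rewrite vclass_map mulmxKV.
  apply: Vmem; first by apply: unimod_mul; rewrite ?unitmx_inv.
  by rewrite (isom_inv Hg Ug).
- move=> C D _ _; apply/idP/idP.
    case/existsP => a' /andP [/imsetP [c Hc ->] /existsP [b' /andP [/imsetP [d Hd ->] Hu]]].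
    apply/existsP; exists c; rewrite Hc /=; apply/existsP; exists d; rewrite Hd /=.
    by move: Hu; have := isom_Bf Hg c d; rewrite /Bf => ->.
  case/existsP => c /andP [Hc /existsP [d /andP [Hd Hu]]].
  apply/existsP; exists (c *m g); apply/andP; split; first by apply/imsetP; exists c.
  apply/existsP; exists (d *m g); apply/andP; split; first by apply/imsetP; exists d.
  by have := isom_Bf Hg c d; rewrite /Bf => ->.
Qed.

Lemma transfer g1 g2 (a c e : 'rV['Z_(2 ^ n)]_m) al1 al2 : g2 \in unitmx -> al2 \is a GRing.unit ->
  a *m g1 = al1 *: e -> c *m g2 = al2 *: e -> a *m (g1 *m invmx g2) = (al1 / al2) *: c.
Proof.
move=> Ug2 Hal2 Ha Hc.
have He : e *m invmx g2 = al2^-1 *: c.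
  have Hc' : c = al2 *: (e *m invmx g2) by rewrite scalemxAl -Hc mulmxK.
  by rewrite [in RHS]Hc' scalerA mulVr // scale1r.
by rewrite mulmxA Ha -scalemxAl He scalerA.
Qed.

Lemma vt : vertex_transitive V adj.
Proof.
move=> x u Hx Hu.
case/imsetP: (Hx) => a0 _ Hx0; have a0x : a0 \in x by rewrite Hx0 vclass_self.
case/imsetP: (Hu) => c0 _ Hu0; have c0u : c0 \in u by rewrite Hu0 vclass_self.
have [Hua Hqa ->] := inV Hx a0x; have [Huc Hqc ->] := inV Hu c0u.
have [g1 [Hg1 Ug1 [al1 Hal1 Ha1]]] := to_e0 Hua Hqa.
have [g2 [Hg2 Ug2 [al2 Hal2 Hc2]]] := to_e0 Huc Hqc.
exists (fmap (g1 *m invmx g2)); split.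
  by apply: fmap_aut; [apply: isom_mul => //; exact: isom_inv | rewrite unitmx_mul Ug1 unitmx_inv Ug2].
by rewrite vclass_map (transfer Ug2 Hal2 Ha1 Hc2) vclass_scale // unitrM Hal1 unitrV Hal2.
Qed.

Lemma arct : arc_transitive V adj.
Proof.
move=> x y u w Hx Hy Hu Hw Hxy Huw.
case/existsP: Hxy => a /andP [Ha /existsP [b /andP [Hb Hab]]].
case/existsP: Huw => c /andP [Hc /existsP [d /andP [Hd Hcd]]].
have [Hua Hqa ->] := inV Hx Ha; have [Hub Hqb ->] := inV Hy Hb.
have [Huc Hqc ->] := inV Hu Hc; have [Hud Hqd ->] := inV Hw Hd.
have [g1 [Hg1 Ug1 [al1 Hal1 Ha1] [be1 Hbe1 Hb1]]] := to_arc Hua Hqa Hqb Hab.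
have [g2 [Hg2 Ug2 [al2 Hal2 Hc2] [be2 Hbe2 Hd2]]] := to_arc Huc Hqc Hqd Hcd.
exists (fmap (g1 *m invmx g2)); split.
  by apply: fmap_aut; [apply: isom_mul => //; exact: isom_inv | rewrite unitmx_mul Ug1 unitmx_inv Ug2].
split.
  by rewrite vclass_map (transfer Ug2 Hal2 Ha1 Hc2) vclass_scale // unitrM Hal1 unitrV Hal2.
by rewrite vclass_map (transfer Ug2 Hbe2 Hb1 Hd2) vclass_scale // unitrM Hbe1 unitrV Hbe2.
Qed.

End Conc2.

Theorem theorem2p5 (n nu delta : nat) (z : 'Z_(2 ^ n)%N) :
  (1 <= n)%N -> (1 <= nu)%N -> (delta <= 2)%N -> z \is a GRing.unit ->
  vertex_transitive (orth_vertices n nu delta z) (orth_adj n nu delta z) /\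
  arc_transitive (orth_vertices n nu delta z) (orth_adj n nu delta z).
Proof. by move=> hn hnu hd hz; split; [exact: vt | exact: arct]. Qed.
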